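(* Let $\Lambda$ be the double of a cellular decomposition of a compact oriented surface without boundary, with a discrete conformal structure $\rho$. Let $\mathcal{A},\mathcal{B}$ be two non-intersecting simple loops in $\Lambda$ such that exactly one edge of $\mathcal{A}$ is dual to an edge of $\mathcal{B}$. Then there exists a unique holomorphic $1$-form $\Phi_{\mathcal{AB}}$ on $\Lambda$ such that $\operatorname{Re}\int_{\mathcal{B}}\Phi_{\mathcal{AB}}=1$ and $\int_\gamma\Phi_{\mathcal{AB}}\in i\mathbb{R}$ for every loop $\gamma$ in $\Lambda$ none of whose edges is dual to an edge of $\mathcal{A}$.
   Context: $\Lambda=\Gamma\sqcup\Gamma^*$ with $\Gamma$ a cellular decomposition and $\Gamma^*$ its Poincaré dual (each edge $e$ crossed by one dual edge $e^*$, $e^{**}=-e$); $\rho:\Lambda_1\to(0,\infty)$ with $\rho(e)\rho(e^* )=1$. Hodge star on 1-forms: $\int_e*\alpha=-\rho(e^* )\int_{e^*}\alpha$. A 1-form $\alpha$ on $\Lambda$ is holomorphic if it is closed ($\oint_{\partial F}\alpha=0$ on every face $F$ of $\Gamma$ and $\Gamma^*$) and $*\alpha=-i\alpha$. *)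

(* Defs.v *)
From HB Require Import structures.
From mathcomp Require Import all_boot all_order all_algebra.
From mathcomp Require Import complex.

Set Implicit Arguments.
Unset Strict Implicit.
Unset Printing Implicit Defensive.
Import Order.TTheory GRing.Theory Num.Theory.
Local Open Scope ring_scope.

(* A cellular decomposition Gamma of a compact connected oriented surface
   without boundary is encoded by a combinatorial map (rotation system):
   a finite set T of darts (oriented edges of Gamma), a fixed-point-free
   involution [alpha] (reversal of orientation, e |-> -e) and a permutation
   [sigma] (next dart counterclockwise around the tail vertex).
   - vertices of Gamma         = sigma-orbits (tail of d = orbit of d);
   - faces of Gamma            = orbits of phi := sigma \o alpha;
   - the dual dart d* of a dart d crosses d from right to left: it goes
     from the face (phi-orbit) of d to the face of alpha d; thus the
     vertices of Gamma^* are the phi-orbits, its faces are the sigma-orbits,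
     and (d* )* = alpha d, i.e. e** = -e.
   A "kind" [k : bool] says whether we are in Gamma (false) or Gamma^* (true). *)

Section CombMap.
Variables (T : finType) (sigma alpha : T -> T).

Definition phi (d : T) : T := sigma (alpha d).

Definition cell_map : Prop :=
  [/\ injective sigma,
      (forall d, alpha (alpha d) = d),
      (forall d, alpha d != d) &
      (forall d d', connect (fun x y => (y == sigma x) || (y == alpha x)) d d')].

Definition vstep (k : bool) : T -> T := if k then phi else sigma.

Definition same_vertex (k : bool) (d d' : T) : bool := fconnect (vstep k) d d'.

Definition is_loop (k : bool) (s : seq T) : bool :=
  cycle (fun x y => same_vertex k (alpha x) y) s.

Definition simple_loop (k : bool) (s : seq T) : bool :=
  [&& s != [::], is_loop k s, uniq (s ++ map alpha s) &
      pairwise (fun x y => ~~ same_vertex k x y) s].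

Definition edge_dual (ka : bool) (a : T) (kb : bool) (b : T) : bool :=
  (ka != kb) && ((b == a) || (b == alpha a)).

Definition non_intersecting (ka : bool) (A : seq T) (kb : bool) (B : seq T) : Prop :=
  forall a b, a \in A -> b \in B -> ka = kb -> ~~ same_vertex ka a b.

Definition n_dual_edges (ka : bool) (A : seq T) (kb : bool) (B : seq T) : nat :=
  count (fun a => has (edge_dual ka a kb) B) A.

End CombMap.

Section Forms.
Variables (R : rcfType) (T : finType) (sigma alpha : T -> T).
Local Open Scope complex_scope.

(* a function on the oriented edges of Lambda = Gamma |_| Gamma^*:
   first component on darts d of Gamma, second on dual darts d* *)
Definition lform := ({ffun T -> R[i]} * {ffun T -> R[i]})%type.

Definition fval (w : lform) (k : bool) (d : T) : R[i] :=
  if k then w.2 d else w.1 d.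

Definition is_form (w : lform) : Prop :=
  forall d, w.1 (alpha d) = - w.1 d /\ w.2 (alpha d) = - w.2 d.

(* discrete conformal structure: rhoP on edges of Gamma, rhoD on edges of
   Gamma^* (d* is dual to d), positive, unoriented, rho(e) rho(e* ) = 1 *)
Definition conformal_structure (rhoP rhoD : T -> R) : Prop :=
  forall d, [/\ 0 < rhoP d, 0 < rhoD d, rhoP (alpha d) = rhoP d,
               rhoD (alpha d) = rhoD d & rhoP d * rhoD d = 1].

Definition closed_form (w : lform) : Prop :=
  forall d, \sum_(x <- orbit (phi sigma alpha) d) w.1 x = 0 /\
            \sum_(x <- orbit sigma d) w.2 x = 0.

(* Hodge star: int_e *w = - rho(e* ) int_{e*} w ; for e = d (primal)
   e* = d*, for e = d* (dual) e* = (d* )* = alpha d. *)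
Definition hodge (rhoP rhoD : T -> R) (w : lform) : lform :=
  ([ffun d => - (rhoD d)%:C * w.2 d],
   [ffun d => - (rhoP (alpha d))%:C * w.1 (alpha d)]).

Definition holomorphic (rhoP rhoD : T -> R) (w : lform) : Prop :=
  closed_form w /\
  hodge rhoP rhoD w = ([ffun d => - 'i * w.1 d], [ffun d => - 'i * w.2 d]).

Definition integral (w : lform) (k : bool) (s : seq T) : R[i] :=
  \sum_(d <- s) fval w k d.

End Forms.

(* Main.v *)
Require Import Defs.
From HB Require Import structures.
From mathcomp Require Import all_boot all_order all_algebra.
From mathcomp Require Import complex.
From mathcomp Require Import ring.
Set Implicit Arguments.
Unset Strict Implicit.
Unset Printing Implicit Defensive.
Import Order.TTheory GRing.Theory Num.Theory.
Local Open Scope ring_scope.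


Section Pot.
Variables (R : rcfType) (T : finType) (f alpha : T -> T) (E : pred T).
Hypotheses (finj : injective f) (alphaK : involutive alpha)
  (Ealpha : forall x, E (alpha x) = E x).

Definition stepE x y := (y == f x) || (x == f y) || ((y == alpha x) && E x).
Definition Rl x y := fconnect f (alpha x) y.

Fixpoint walk u W v := if W is x :: W' then fconnect f u x && walk (alpha x) W' v
  else fconnect f u v.

Lemma fc_sym x y : fconnect f x y = fconnect f y x.
Proof. exact: fconnect_sym. Qed.

Lemma fc_trans x y z : fconnect f x y -> fconnect f y z -> fconnect f x z.
Proof. exact: connect_trans. Qed.

Lemma walk_start u u' W v : fconnect f u u' -> walk u' W v -> walk u W v.
Proof. case: W => [|x W] /= H; [exact: fc_trans | case/andP=> H1 ->].
by rewrite (fc_trans H H1). Qed.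

Lemma walk_end u W v v' : fconnect f v v' -> walk u W v -> walk u W v'.
Proof. elim: W u => [|x W IH] u /= H; [move=> H1; exact: fc_trans H1 H|].
by case/andP=> -> /IH ->. Qed.

Lemma walk_cat u W1 v W2 w : walk u W1 v -> walk v W2 w -> walk u (W1 ++ W2) w.
Proof. elim: W1 u => [|x W IH] u /=; first by move=> H1 H2; exact: walk_start H2.
by case/andP=> -> H1 H2; rewrite (IH _ H1 H2). Qed.

Lemma walk_rev u W v : walk u W v -> walk v (rev (map alpha W)) u.
Proof. elim: W u => [|x W IH] u /=; first by rewrite fc_sym.
case/andP=> H1 H2; rewrite rev_cons -cats1; apply: walk_cat (IH _ H2) _.
by rewrite /= connect0 alphaK fc_sym. Qed.

Lemma walk_path x W v y : walk (alpha x) W v -> fconnect f v y -> path Rl x (rcons W y).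
Proof. elim: W x => [|z W IH] x /=; first by move=> H1 H2; rewrite /Rl (fc_trans H1 H2).
by case/andP=> H1 H2 H3; rewrite /Rl H1 (IH _ H2 H3). Qed.

Lemma walk_cycle u W : walk u W u -> cycle Rl W.
Proof. case: W => [|x W] //= /andP[H1 H2]; exact: walk_path H2 H1. Qed.

Lemma walk_ex u v : connect stepE u v -> exists W, walk u W v && all E W.
Proof.
case/connectP=> s pth ->; elim: s u pth => [|y s IH] u /=.
  by move=> _; exists [::]; rewrite /= connect0.
case/andP=> st /IH [W /andP[HW HE]].
case/orP: st => [Hs|/andP[/eqP Hy Eu]].
  exists W; rewrite HE andbT; apply: (walk_start _ HW).
  by case/orP: Hs => /eqP ->; [exact: fconnect1| rewrite fc_sym; exact: fconnect1].
by exists (u :: W); rewrite /= connect0 -Hy HW Eu HE.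
Qed.

Variable (omega : T -> R).
Hypothesis omegaN : forall x, omega (alpha x) = - omega x.
Hypothesis omega_loop : forall g, cycle Rl g -> all E g -> \sum_(x <- g) omega x = 0.

Lemma walk_indep u v W1 W2 : walk u W1 v -> walk u W2 v -> all E W1 -> all E W2 ->
  \sum_(x <- W1) omega x = \sum_(x <- W2) omega x.
Proof.
move=> H1 H2 E1 E2; have HL := walk_cat H1 (walk_rev H2).
have := omega_loop (walk_cycle HL); rewrite all_cat E1 /= all_rev all_map.
have -> : all (preim alpha E) W2 by apply/allP=> x xW; rewrite /= Ealpha (allP E2).
rewrite big_cat /= big_rev big_map.
under [X in _ + X]eq_bigr do rewrite omegaN.
by rewrite sumrN => /(_ isT) /eqP; rewrite subr_eq0 => /eqP.
Qed.

Hypothesis conn : forall x y, connect stepE x y.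

Lemma potential : exists F : T -> R, (forall x, F (f x) = F x) /\
  forall x, E x -> omega x = F (alpha x) - F x.
Proof.
case: (pickP (@predT T)) => [r _|T0]; last first.
  by exists (fun _ => 0); split=> x; have := T0 x.
have ex x : exists W, walk r W x && all E W by apply: walk_ex.
pose W x := xchoose (ex x).
have WP x : walk r (W x) x && all E (W x) := xchooseP (ex x).
exists (fun x => \sum_(y <- W x) omega y); split=> [x|x Ex].
  have /andP[H1 H2] := WP (f x); have /andP[H3 H4] := WP x.
  apply: walk_indep H1 _ H2 H4; apply: walk_end H3; exact: fconnect1.
have /andP[H1 H2] := WP (alpha x); have /andP[H3 H4] := WP x.
have H5 : walk r (W x ++ [:: x]) (alpha x).
  by apply: walk_cat H3 _; rewrite /= !connect0.
rewrite (walk_indep H1 H5 H2); last by rewrite all_cat H4 /= Ex.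
by rewrite big_cat big_seq1 /= addrC addrK.
Qed.

End Pot.


Lemma conn_inv (T : finType) (e : rel T) (P : pred T) :
  (forall x y, e x y -> P x -> P y) -> forall x y, connect e x y -> P x -> P y.
Proof.
move=> H x _ /connectP[p e_p ->]; elim: p x e_p => //= y p IH x /andP[exy ep] Px.
exact: IH ep (H _ _ exy Px).
Qed.

Section Harm.
Variables (R : rcfType) (T : finType) (f alpha : T -> T).
Hypotheses (finj : injective f) (alphaK : involutive alpha).
Variables (w : T -> R).
Hypothesis wP : forall x, 0 < w x.
Hypothesis conn : forall x y, connect (stepE f alpha predT) x y.

Lemma orbit_const (h : T -> R) : (forall x, h (f x) = h x) ->
  forall x y, fconnect f x y -> h y = h x.
Proof.
move=> hf x y H; symmetry; apply: (fconnect_invariant (k := h)) H.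
by move=> z; rewrite /= hf eqxx.
Qed.

Lemma harmonic_const (h : T -> R) : (forall x, h (f x) = h x) ->
  (forall d, \sum_(y | fconnect f d y) w y * (h (alpha y) - h y) = 0) ->
  forall x y, h x = h y.
Proof.
move=> hf hL x y.
case: (@arg_maxP _ _ T x predT h isT) => m _ mmax.
pose P := [pred z | h z == h m].
suff HP z : P z by rewrite (eqP (HP x)) (eqP (HP y)).
apply: (conn_inv (e := stepE f alpha predT)) (conn m z) _; last by rewrite /= eqxx.
move=> a b /orP[/orP[]/eqP->|/andP[/eqP-> _]] /= /eqP Ha.
- by rewrite hf Ha.
- by rewrite -Ha hf.
have S0 : \sum_(t | fconnect f a t) w t * (h t - h (alpha t)) = 0.
  apply/eqP; rewrite -oppr_eq0 -sumrN; apply/eqP; rewrite -[RHS](hL a).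
  apply: eq_bigr => t _.
  by rewrite -mulrN opprB.
have H0 := psumr_eq0P _ S0.
have {}H0 : forall t, fconnect f a t -> w t * (h t - h (alpha t)) = 0.
  apply: H0 => t Hy; apply: mulr_ge0; first exact: ltW.
  rewrite subr_ge0 (orbit_const hf Hy) Ha; exact: mmax.
move/eqP: (H0 a (connect0 _ _)); rewrite mulf_eq0 (gt_eqF (wP a)) /= subr_eq0.
by move=> /eqP <-; rewrite Ha.
Qed.

End Harm.


Lemma sum_ev (R : rcfType) (T : finType) (F : T -> R) :
  \sum_(i < #|T|) F (enum_val i) = \sum_x F x.
Proof.
rewrite (reindex (@enum_rank T)); last by apply: onW_bij; exact: enum_rank_bij.
by apply: eq_bigr => x _; rewrite enum_rankK.
Qed.

Lemma sum_delta (R : rcfType) (T : finType) (H : T -> R) a :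
  \sum_z H z * (a == z)%:R = H a.
Proof.
rewrite (bigD1 a) //= eqxx mulr1 big1 ?addr0 // => z /negbTE.
by rewrite eq_sym => ->; rewrite mulr0.
Qed.

Lemma square_inj_surj (R : rcfType) n (M : 'M[R]_n) :
  (forall u : 'rV_n, u *m M = 0 -> u = 0) -> forall v : 'rV_n, exists u, u *m M = v.
Proof.
move=> inj v; have Mu : M \in unitmx.
  rewrite -row_free_unit -kermx_eq0; apply/eqP/row_matrixP => i.
  by rewrite row0; apply: inj; rewrite -row_mul mulmx_ker row0.
by exists (v *m invmx M); rewrite mulmxKV.
Qed.

Section Lap.
Variables (R : rcfType) (T : finType) (f alpha : T -> T).
Hypotheses (finj : injective f) (alphaK : involutive alpha).
Variables (w : T -> R).
Hypothesis wP : forall x, 0 < w x.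
Hypothesis walpha : forall x, w (alpha x) = w x.
Hypothesis conn : forall x y, connect (stepE f alpha predT) x y.

Let csym := fconnect_sym finj.

Let rt := froot f.
Let isroot x := rt x == x.

Lemma rt_rt x : rt (rt x) = rt x. Proof. exact: fingraph.root_root. Qed.
Lemma fc_rt d y : fconnect f d y = (rt y == rt d).
Proof. by rewrite eq_sym fingraph.root_connect. Qed.
Lemma rt_f x : rt (f x) = rt x.
Proof. rewrite /rt; apply/esym/(fingraph.rootP csym); exact: fconnect1. Qed.

Lemma sum_roots (F : T -> R) :
  \sum_(x | isroot x) \sum_(y | rt y == x) F y = \sum_y F y.
Proof.
symmetry; rewrite (partition_big rt isroot) /=; last by move=> i _; rewrite /isroot rt_rt.
by [].
Qed.

Lemma sum_alpha (F : T -> R) : \sum_y F (alpha y) = \sum_y F y.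
Proof. by rewrite (reindex_inj (inv_inj alphaK)); apply: eq_bigr => y _; rewrite alphaK. Qed.

Definition Kop (H : T -> R) x :=
  if isroot x then \sum_(y | rt y == x) w y * (H (rt (alpha y)) - H x) +
                   \sum_(z | isroot z) H z
  else H x.

Definition Kc z x : R :=
  if isroot x then \sum_(y | rt y == x) w y * ((rt (alpha y) == z)%:R - (x == z)%:R)
                   + (isroot z)%:R
  else (x == z)%:R.

Lemma KcE H x : \sum_z H z * Kc z x = Kop H x.
Proof.
rewrite /Kc /Kop; case: ifP => _; last exact: sum_delta.
under eq_bigr do rewrite mulrDr; rewrite big_split /=; congr (_ + _).
  under eq_bigr do rewrite mulr_sumr; rewrite exchange_big /=.
  apply: eq_bigr => y _.
  under eq_bigr do rewrite mulrCA mulrBr.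
  by rewrite -mulr_sumr sumrB !sum_delta.
rewrite [RHS]big_mkcond /=; apply: eq_bigr => z _.
by case: (isroot z); rewrite ?mulr1 ?mulr0.
Qed.

Let n := #|T|.
Let ev : 'I_n -> T := enum_val.
Definition Km : 'M[R]_n := \matrix_(i, j) Kc (ev i) (ev j).

Lemma KmE (u : 'rV[R]_n) x :
  (u *m Km) 0 (enum_rank x) = Kop (fun z => u 0 (enum_rank z)) x.
Proof.
rewrite -KcE -sum_ev mxE; apply: eq_bigr => i _.
by rewrite mxE /ev enum_valK enum_rankK.
Qed.

Lemma sum_roots_const (F : T -> R) :
  \sum_(x | isroot x) \sum_(y | rt y == x) w y * (F (rt (alpha y)) - F x) = 0.
Proof.
rewrite (eq_bigr (fun x => \sum_(y | rt y == x) w y * (F (rt (alpha y)) - F (rt y)))).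
  rewrite sum_roots; under eq_bigr do rewrite mulrBr.
  rewrite sumrB; under [X in X - _]eq_bigr do rewrite -walpha.
  by have /= -> := sum_alpha (fun y => w y * F (rt y)); rewrite subrr.
by move=> x _; apply: eq_bigr => y /eqP ->.
Qed.

Lemma nroots_gt0 : (exists x : T, true) -> (0 < #|isroot|)%N.
Proof. case=> x _; apply/card_gt0P; exists (rt x); by rewrite unfold_in /isroot rt_rt. Qed.

Lemma Kop_inj H : (forall x, Kop H x = 0) -> forall x, H x = 0.
Proof.
move=> K0.
have nonroot x : ~~ isroot x -> H x = 0.
  by move=> /negbTE nx; have := K0 x; rewrite /Kop nx.
pose S := \sum_(z | isroot z) H z.
have S0 : S = 0.
  have := sum_roots_const H.
  rewrite (eq_bigr (fun x => - S)); last first.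
    by move=> x xr; have := K0 x; rewrite /Kop xr => /eqP; rewrite addr_eq0 => /eqP.
  rewrite sumr_const => /eqP; rewrite mulrn_eq0 oppr_eq0.
  case/orP => [/eqP C|/eqP //]; move: C; rewrite /S.
  move=> C; rewrite big_pred0 // => z; have := card0_eq C z.
  by rewrite unfold_in.
pose h x := H (rt x).
have hf x : h (f x) = h x by rewrite /h rt_f.
have hL d : \sum_(y | fconnect f d y) w y * (h (alpha y) - h y) = 0.
  rewrite -[RHS](K0 (rt d)) /Kop /isroot rt_rt eqxx -/S S0 addr0.
  apply: eq_big => [y|y]; first exact: fc_rt.
  by rewrite fc_rt => /eqP Hy; rewrite /h Hy.
have hc := harmonic_const wP conn hf hL.
move=> x; case xr: (isroot x); last by rewrite nonroot ?xr.
have : S = h x *+ #|isroot|.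
  rewrite /S -sumr_const; apply: eq_bigr => z zr.
  by rewrite (hc x z) /h (eqP zr).
rewrite S0 => /eqP; rewrite eq_sym mulrn_eq0 => /orP[/eqP C|/eqP].
  by move: C; have := nroots_gt0 (ex_intro _ x isT) => /[swap] ->.
by rewrite /h (eqP xr).
Qed.

Lemma laplace_solve (G : T -> R) : (forall x, G (alpha x) = - G x) ->
  exists h : T -> R, (forall x, h (f x) = h x) /\
    forall d, \sum_(y | fconnect f d y) (w y * (h (alpha y) - h y) + G y) = 0.
Proof.
move=> GN.
have SG : \sum_y G y = 0.
  have E1 : \sum_y G y = - \sum_y G y.
    by rewrite -{1}(sum_alpha G) -sumrN; apply: eq_bigr => y _; rewrite GN.
  by move/eqP: E1; rewrite -addr_eq0 -mulr2n mulrn_eq0 => /orP[//|/eqP].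
pose g x := if isroot x then - \sum_(y | rt y == x) G y else 0.
have [u Hu] : exists u : 'rV_n, u *m Km = \row_i g (ev i).
  apply: square_inj_surj => u Hu; apply/rowP => i; rewrite mxE.
  have := Kop_inj (H := fun z => u 0 (enum_rank z)).
  move=> /(_ _ (ev i)); rewrite /ev enum_valK; apply.
  by move=> x; rewrite -KmE Hu !mxE.
pose H z := u 0 (enum_rank z).
have KH x : Kop H x = g x.
  by rewrite -KmE Hu mxE /ev enum_rankK.
pose S := \sum_(z | isroot z) H z.
have S0 : S = 0.
  have := sum_roots_const H.
  rewrite (eq_bigr (fun x => (- \sum_(y | rt y == x) G y) - S)); last first.
    by move=> x xr; have := KH x; rewrite /Kop /g xr => <-; rewrite addrK.
  rewrite sumrB sumrN sum_roots SG oppr0 sub0r sumr_const => /eqP.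
  rewrite oppr_eq0 mulrn_eq0 => /orP[/eqP C|/eqP //].
  case: (pickP (@predT T)) => [x _|T0].
    by move: C; have := nroots_gt0 (ex_intro _ x isT) => /[swap] ->.
  by rewrite /S big_pred0 // => z; have := T0 z.
exists (fun x => H (rt x)); split=> [x|d]; first by rewrite rt_f.
have := KH (rt d); rewrite /Kop /g /isroot rt_rt eqxx -/S S0 addr0.
move=> /eqP; rewrite -subr_eq0 opprK -big_split /= => /eqP E0.
rewrite -[RHS]E0; apply: eq_big => [y|y]; first exact: fc_rt.
by rewrite fc_rt => /eqP Hy; rewrite Hy.
Qed.

End Lap.


Section Comb.
Local Open Scope nat_scope.
Variables (T : finType) (p q alpha : T -> T).
Hypotheses (pinj : injective p) (alphaK : involutive alpha)
  (alpha_neq : forall x, alpha x != x) (pq : forall x, q x = p (alpha x)).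
Variables (A B : seq T).
Hypotheses (Acyc : cycle (fun x y => fconnect p (alpha x) y) A)
  (Auniq : uniq (A ++ map alpha A))
  (Apair : pairwise (fun x y => ~~ fconnect p x y) A).

Lemma qp x : p x = q (alpha x). Proof. by rewrite pq alphaK. Qed.
Lemma qinj : injective q.
Proof. by move=> x y; rewrite !pq => /pinj /(inv_inj alphaK). Qed.

Lemma Auniq1 : uniq A. Proof. by move: Auniq; rewrite cat_uniq => /and3P[]. Qed.
Lemma Adisj a : a \in A -> alpha a \notin A.
Proof.
move=> aA; apply/negP => aaA; move: Auniq; rewrite cat_uniq => /and3P[_ /hasP H _].
by apply: H; exists (alpha a) => //; apply/mapP; exists a.
Qed.

Lemma tails_eq a a' : a \in A -> a' \in A -> fconnect p a a' -> a = a'.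
Proof.
elim: A Apair => // x s IH /= /andP[/allP Hx Hs].
rewrite !inE => /orP[/eqP->|aA] /orP[/eqP->|aA'] // H.
- by have := Hx _ aA'; rewrite H.
- by have := Hx _ aA; rewrite fconnect_sym // H.
- exact: IH.
Qed.

Lemma heads_eq a a' : a \in A -> a' \in A -> fconnect p (alpha a) (alpha a') -> a = a'.
Proof.
move=> aA aA' H.
have H1 := next_cycle Acyc aA; have H2 := next_cycle Acyc aA'.
have : next A a = next A a'.
  apply: tails_eq; rewrite ?mem_next //.
  apply: (connect_trans (y := alpha a)); first by rewrite fconnect_sym.
  exact: connect_trans H H2.
by move/(congr1 (prev A)); rewrite !prev_next //; exact: Auniq1.
Qed.

Definition cr x := (x \in A) || (alpha x \in A).
Lemma cr_alpha x : cr (alpha x) = cr x.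
Proof. by rewrite /cr alphaK orbC. Qed.

Lemma consec_cr y z t : y \in A -> z \in A -> fconnect p (alpha y) z ->
  fconnect p z t -> cr t -> (t == z) || (t == alpha y).
Proof.
move=> yA zA Hyz Hzt /orP[tA|atA].
  by rewrite (tails_eq zA tA Hzt) eqxx.
have -> // : alpha y = t; last by rewrite eqxx orbT.
apply: (can_inj alphaK); rewrite alphaK; apply: heads_eq => //.
by rewrite alphaK; apply: connect_trans Hyz Hzt.
Qed.

Lemma vertex_cr z : cr z -> exists y z', [/\ y \in A, z' \in A,
  fconnect p (alpha y) z' & fconnect p z' z].
Proof.
case/orP=> [zA|azA].
  exists (prev A z), z; split; rewrite ?mem_prev ?connect0 //.
  exact: prev_cycle Acyc zA.
exists (alpha z), (next A (alpha z)); split; rewrite ?mem_next //.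
  exact: next_cycle Acyc azA.
rewrite fconnect_sym //; have := next_cycle Acyc azA; by rewrite /= alphaK.
Qed.

Definition Ecut x := ~~ cr x.
Lemma Ecut_alpha x : Ecut (alpha x) = Ecut x.
Proof. by rewrite /Ecut cr_alpha. Qed.

Notation stepC := (stepE q alpha Ecut).

Lemma stepC_sym : symmetric stepC.
Proof.
move=> x y; rewrite /stepE; apply/idP/idP => /orP[/orP[]->|/andP[/eqP-> H]];
  by rewrite ?orbT // alphaK eqxx Ecut_alpha H ?orbT.
Qed.

Lemma connC_sym : connect_sym stepC.
Proof. exact: sym_connect_sym stepC_sym. Qed.

Lemma connC_q x : connect stepC x (q x).
Proof. by apply: connect1; rewrite /stepE eqxx. Qed.
Lemma connC_alpha x : Ecut x -> connect stepC x (alpha x).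
Proof. by move=> H; apply: connect1; rewrite /stepE eqxx H !orbT. Qed.
Lemma connC_fq x y : fconnect q x y -> connect stepC x y.
Proof.
move/connectP=> [s ps ->]; elim: s x ps => [|z s IH] x /=; first by rewrite connect0.
case/andP => /eqP<- H; exact: connect_trans (connC_q x) (IH _ H).
Qed.
Lemma connC_p x : Ecut x -> connect stepC x (p x).
Proof. by move=> H; rewrite qp; apply: connect_trans (connC_alpha H) (connC_q _). Qed.

Lemma iter_neq x j : 0 < j -> j < order p x -> iter j p x != x.
Proof.
move=> j0 jo; apply/eqP => H; have := findex_iter jo.
by rewrite H findex0 => j0'; rewrite -j0' in j0.
Qed.

Lemma walk_orbit x0 k : 0 < k -> (forall j, 0 < j -> j < k -> Ecut (iter j p x0)) ->
  connect stepC (p x0) (iter k p x0).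
Proof.
elim: k => // k IH _ H; case: k IH H => [|k] IH H; first by rewrite connect0.
apply: connect_trans (IH isT _) _; first by move=> j j0 jk; apply: H => //; exact: ltnW.
by rewrite iterS; apply: connC_p; apply: (H k.+1).
Qed.

Lemma orbit_walk x0 z : fconnect p x0 z -> x0 != z ->
  (forall t, fconnect p x0 t -> t != x0 -> t != z -> Ecut t) ->
  connect stepC (p x0) z.
Proof.
move=> Hz nz HE; have := iter_findex Hz; set k := findex p x0 z => Hk.
have k0 : 0 < k by rewrite lt0n /k findex_eq0.
have kmax : k < order p x0 := findex_max Hz.
rewrite -Hk; apply: walk_orbit => // j j0 jk; apply: HE.
- exact: fconnect_iter.
- by apply: iter_neq => //; apply: ltn_trans kmax.
- apply/eqP => Hj; have := findex_iter (ltn_trans jk kmax).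
  by rewrite Hj -/k => Hjk; rewrite Hjk ltnn in jk.
Qed.

Lemma fan y z : y \in A -> z \in A -> fconnect p (alpha y) z ->
  connect stepC y z /\ connect stepC (alpha y) (alpha z).
Proof.
move=> yA zA Hyz.
have nz : alpha y != z by apply: contraTneq zA => <-; exact: Adisj.
have Hcr t : fconnect p z t -> t != z -> t != alpha y -> Ecut t.
  move=> Ht n1 n2; apply/negP => C; have := consec_cr yA zA Hyz Ht C.
  by rewrite (negbTE n1) (negbTE n2).
split.
  apply: connect_trans (connC_q y) _; rewrite pq.
  apply: orbit_walk => // t Ht n1 n2; apply: Hcr => //.
  apply: connect_trans _ Ht; by rewrite fconnect_sym.
rewrite connC_sym; apply: connect_trans (connC_q (alpha z)) _; rewrite pq alphaK.
have Hz' : fconnect p z (alpha y) by rewrite fconnect_sym.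
apply: (orbit_walk Hz'); first by rewrite eq_sym.
by move=> t Ht n1 n2; apply: Hcr.
Qed.

Lemma path_fan x s : x \in A -> all (mem A) s -> path (fun x y => fconnect p (alpha x) y) x s ->
  forall t, t \in x :: s -> connect stepC x t /\ connect stepC (alpha x) (alpha t).
Proof.
elim: s x => [|y s IH] x xA /= .
  by move=> _ _ t; rewrite inE => /eqP->; rewrite !connect0.
case/andP=> yA sA /andP[Hxy Hp] t; rewrite inE => /orP[/eqP->|]; first by rewrite !connect0.
have [F1 F2] := fan xA yA Hxy.
move=> /(IH y yA sA Hp) [G1 G2]; split; [exact: connect_trans F1 G1|exact: connect_trans F2 G2].
Qed.

Lemma A_conn a a' : a \in A -> a' \in A ->
  connect stepC a a' /\ connect stepC (alpha a) (alpha a').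
Proof.
move=> aA a'A; case HA: A aA a'A Acyc => [//|x s] aA a'A Hc.
have Hp : path (fun x y => fconnect p (alpha x) y) x s.
  by move: Hc; rewrite /= rcons_path => /andP[].
have sA : all (mem A) s by apply/allP => t ts; rewrite /= HA inE ts orbT.
have xA : x \in A by rewrite HA mem_head.
have [H1 H2] := path_fan xA sA Hp aA.
have [H3 H4] := path_fan xA sA Hp a'A.
split; [apply: connect_trans H3|apply: connect_trans H4]; by rewrite connC_sym.
Qed.

Hypotheses (Bcyc : cycle (fun x y => fconnect q (alpha x) y) B)
  (Buniq : uniq (B ++ map alpha B))
  (AB1 : count (fun a => has (fun b => (b == a) || (b == alpha a)) B) A = 1)
  (connp : forall x y, connect (stepE p alpha predT) x y).

Lemma Buniq1 : uniq B. Proof. by move: Buniq; rewrite cat_uniq => /and3P[]. Qed.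
Lemma Bdisj b : b \in B -> alpha b \notin B.
Proof.
move=> bB; apply/negP => abB; move: Buniq; rewrite cat_uniq => /and3P[_ /hasP H _].
by apply: H; exists (alpha b) => //; apply/mapP; exists b.
Qed.

Lemma B_cross : exists a0, exists b0, [/\ a0 \in A, b0 \in B,
  (b0 == a0) || (b0 == alpha a0) & forall b, b \in B -> cr b -> b = b0].
Proof.
set P := fun a => has (fun b => (b == a) || (b == alpha a)) B.
have : has P A by rewrite has_count AB1.
case/hasP => a0 a0A /hasP [b0 b0B Hb0]; exists a0, b0; split => // b bB crb.
pose a := if b \in A then b else alpha b.
have aA : a \in A by rewrite /a; case: ifP => // /negbT; move: crb => /orP[->|].
have Pa : P a.
  apply/hasP; exists b => //; rewrite /a; case: ifP => _; first by rewrite eqxx.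
  by rewrite alphaK eqxx orbT.
have aa0 : a = a0.
  apply/eqP/negP => /negP na.
  have := perm_to_rem a0A => /permP /(_ P); rewrite AB1 /= -/(P a0).
  have -> : P a0 by apply/hasP; exists b0.
  move=> /eqP; rewrite eqSS eq_sym -leqn0 leqNgt -has_count => /hasPn /(_ a).
  rewrite (mem_rem_uniq _ Auniq1) inE na aA Pa => /(_ isT).
  by [].
move: Pa; rewrite aa0 => /hasP _.
have Hb : (b == a0) || (b == alpha a0).
  move: aa0; rewrite /a; case: ifP => _ <-; first by rewrite eqxx.
  by rewrite alphaK eqxx orbT.
apply/eqP; apply/negP => nb.
case/orP: Hb0 => /eqP E0; case/orP: Hb => /eqP E1.
- by rewrite E1 E0 eqxx in nb.
- by have := Bdisj b0B; rewrite E0 -E1 bB.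
- by have := Bdisj bB; rewrite E1 -E0 b0B.
- by rewrite E1 E0 eqxx in nb.
Qed.

Lemma path_walkC x s y : path (fun x y => fconnect q (alpha x) y) x (rcons s y) ->
  all Ecut s -> connect stepC (alpha x) y.
Proof.
elim: s x => [|t s IH] x /=; first by rewrite andbT => H _; exact: connC_fq.
case/andP=> H1 H2 /andP[Et Es].
apply: connect_trans (connC_fq H1) (connect_trans (connC_alpha Et) (IH _ H2 Es)).
Qed.

Lemma connC_all x y : connect stepC x y.
Proof.
have [a0 [b0 [a0A b0B Hab C]]] := B_cross.
have Hb : connect stepC (alpha b0) b0.
  case: (rot_to b0B) => i s' Hr.
  have := Bcyc; rewrite -(rot_cycle i) Hr /= => Hp; apply: path_walkC Hp _.
  apply/allP => t ts; apply/negP => crt.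
  have tB : t \in B by rewrite -(mem_rot i) Hr inE ts orbT.
  have := C t tB crt => tb0; move: Buniq1; rewrite -(rot_uniq i) Hr /=.
  by rewrite -tb0 ts.
have Ha : connect stepC a0 (alpha a0).
  by case/orP: Hab => /eqP E; move: Hb; rewrite E ?alphaK // connC_sym.
have crc t : cr t -> connect stepC a0 t.
  case/orP=> [tA|atA]; first by case: (A_conn a0A tA).
  apply: connect_trans Ha _; case: (A_conn a0A atA) => _; by rewrite alphaK.
have c_alpha t : connect stepC t (alpha t).
  case Et: (Ecut t); first exact: connC_alpha.
  have ct : cr t by rewrite /Ecut in Et; apply/negbFE.
  apply: (connect_trans (y := a0)); first by rewrite connC_sym; exact: crc.
  by apply: crc; rewrite cr_alpha.
have c_p t : connect stepC t (p t).
  rewrite qp; exact: connect_trans (c_alpha t) (connC_q _).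
suff H : forall z, connect stepC a0 z.
  by apply: connect_trans (H y); rewrite connC_sym.
move=> z; apply: (connect_sub _ (connp a0 z)) => u v.
case/orP => [/orP[]/eqP->|/andP[/eqP-> _]] //; by rewrite connC_sym.
Qed.

Lemma connQ x y : connect (stepE q alpha predT) x y.
Proof.
apply: (connect_sub _ (connC_all x y)) => u v Huv; apply: connect1.
by move: Huv; rewrite /stepE => /orP[->//|/andP[-> _]]; rewrite !orbT.
Qed.

Local Open Scope ring_scope.
Variable (R : rcfType).

Lemma fc_same (f : T -> T) (finj : injective f) d z t :
  fconnect f z d -> fconnect f d t = fconnect f z t.
Proof.
move=> H; apply/idP/idP => H1; first exact: connect_trans H H1.
by apply: connect_trans H1; rewrite fconnect_sym.
Qed.

Lemma osum_consec y z (F : T -> R) : y \in A -> z \in A -> fconnect p (alpha y) z ->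
  (forall t, Ecut t -> F t = 0) -> \sum_(t | fconnect p z t) F t = F z + F (alpha y).
Proof.
move=> yA zA Hyz F0.
have nz : alpha y != z by apply: contraTneq zA => <-; exact: Adisj.
rewrite (bigD1 z) ?connect0 //= (bigD1 (alpha y)) /=; last first.
  by rewrite nz andbT fconnect_sym.
rewrite big1 ?addr0 // => t /andP[/andP[Ht n1] n2]; apply: F0; apply/negP => C.
by have := consec_cr yA zA Hyz Ht C; rewrite (negbTE n1) (negbTE n2).
Qed.

Lemma osum_gen d (F : T -> R) : (forall t, Ecut t -> F t = 0) ->
  \sum_(t | fconnect p d t) F t = 0 \/ exists y z, [/\ y \in A, z \in A,
  fconnect p (alpha y) z & \sum_(t | fconnect p d t) F t = F z + F (alpha y)].
Proof.
move=> F0; case: (pickP (fun t => fconnect p d t && cr t)) => [t /andP[Ht Ct]|N].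
  have [y [z [yA zA Hyz Hzt]]] := vertex_cr Ct; right; exists y, z; split=> //.
  have Hzd : fconnect p z d by apply: connect_trans Hzt _; rewrite fconnect_sym.
  rewrite -(osum_consec yA zA Hyz F0); apply: eq_bigl => u.
  exact: (fc_same pinj u Hzd).
left; apply: big1 => t Ht; apply: F0; by have := N t; rewrite Ht /= /Ecut => ->.
Qed.

Definition chi x : R := if x \in A then 1 else if alpha x \in A then -1 else 0.

Lemma chiN x : chi (alpha x) = - chi x.
Proof.
rewrite /chi (alphaK x).
case: (boolP (x \in A)) => xA; case: (boolP (alpha x \in A)) => axA.
- by have := Adisj xA; rewrite axA.
- by [].
- by rewrite opprK.
- by rewrite oppr0.
Qed.

Lemma chiE x : Ecut x -> chi x = 0.
Proof. by rewrite /Ecut /cr negb_or /chi => /andP[/negbTE-> /negbTE->]. Qed.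

Lemma chi_closed d : \sum_(t | fconnect p d t) chi t = 0.
Proof.
case: (osum_gen d chiE) => // [[y [z [yA zA _ ->]]]].
rewrite /chi zA (negbTE (Adisj yA)) alphaK yA; exact: subrr.
Qed.

Lemma dh_closed (h : T -> R) d : (forall x, h (q x) = h x) ->
  \sum_(t | fconnect p d t) (h (alpha t) - h t) = 0.
Proof.
move=> hq; rewrite sumrB; apply/eqP; rewrite subr_eq0; apply/eqP.
rewrite [RHS](reindex_inj pinj) /=; apply: eq_big => t.
  by rewrite -same_fconnect1_r.
by move=> _; rewrite qp hq.
Qed.

Lemma loop_dh (h : T -> R) g : (forall x, h (q x) = h x) ->
  cycle (fun x y => fconnect q (alpha x) y) g -> \sum_(x <- g) (h (alpha x) - h x) = 0.
Proof.
move=> hq; case: g => [|x0 s] /=; first by rewrite big_nil.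
have hc u v : fconnect q u v -> h v = h u.
  by move=> H; apply: (orbit_const (f := q)) H.
suff H : forall x s', path (fun x y => fconnect q (alpha x) y) x s' ->
   \sum_(y <- belast x s') h (alpha y) = \sum_(z <- s') h z.
  move/H; rewrite belast_rcons => E; rewrite sumrB E.
  by rewrite (perm_big (x0 :: s)) ?subrr // perm_rcons.
move=> x s'; elim: s' x => [|y s' IH] x /=; first by rewrite !big_nil.
by case/andP=> H1 H2; rewrite !big_cons (IH _ H2) (hc _ _ H1).
Qed.

Lemma B_sum (F : T -> R) : (forall t, Ecut t -> F t = 0) ->
  exists a0, exists b0, [/\ a0 \in A, (b0 == a0) || (b0 == alpha a0)
     & \sum_(x <- B) F x = F b0].
Proof.
move=> F0; have [a0 [b0 [a0A b0B Hab C]]] := B_cross; exists a0, b0; split => //.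
rewrite (bigD1_seq b0) //= ?Buniq1 // big1_seq ?addr0 // => t /andP[nt tB].
apply: F0; apply/negP => crt; by rewrite (C t tB crt) eqxx in nt.
Qed.

Lemma A_const (F : T -> R) :
  (forall y z, y \in A -> z \in A -> fconnect p (alpha y) z -> F z = F y) ->
  forall a a', a \in A -> a' \in A -> F a = F a'.
Proof.
move=> HF.
suff H : forall x s, x \in A -> all (mem A) s ->
    path (fun x y => fconnect p (alpha x) y) x s ->
    forall t, t \in x :: s -> F t = F x.
  move=> a a' aA a'A; case HA: A aA a'A Acyc => [//|x s] aA a'A Hc.
  have Hp : path (fun x y => fconnect p (alpha x) y) x s.
    by move: Hc; rewrite /= rcons_path => /andP[].
  have sA : all (mem A) s by apply/allP => t ts; rewrite /= HA inE ts orbT.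
  have xA : x \in A by rewrite HA mem_head.
  by rewrite (H _ _ xA sA Hp a aA) (H _ _ xA sA Hp a' a'A).
move=> x s; elim: s x => [|y s IH] x xA /=.
  by move=> _ _ t; rewrite inE => /eqP->.
case/andP=> yA sA /andP[Hxy Hp] t; rewrite inE => /orP[/eqP->//|].
by move=> /(IH y yA sA Hp) ->; exact: HF.
Qed.

Variable (w : T -> R).
Hypotheses (wP : forall x, 0 < w x) (walpha : forall x, w (alpha x) = w x).

Lemma core_exist : exists b : T -> R, [/\ forall x, b (alpha x) = - b x,
  forall d, \sum_(t | fconnect p d t) b t = 0,
  forall d, \sum_(t | fconnect q d t) w t * b t = 0,
  forall g, cycle (fun x y => fconnect q (alpha x) y) g -> all Ecut g ->
    \sum_(x <- g) b x = 0 &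
  \sum_(x <- B) b x = 1].
Proof.
have [a0 [b0 [a0A Hab HB]]] := B_sum chiE.
set k := \sum_(x <- B) chi x.
have k0 : k != 0.
  rewrite /k HB /chi; case/orP: Hab => /eqP->; first by rewrite a0A oner_eq0.
  by rewrite (negbTE (Adisj a0A)) alphaK a0A oppr_eq0 oner_eq0.
pose c := k^-1.
pose G t := w t * (c * chi t).
have GN x : G (alpha x) = - G x by rewrite /G walpha chiN mulrN mulrN.
have [h [hq hL]] := laplace_solve qinj alphaK wP walpha connQ GN.
exists (fun t => (h (alpha t) - h t) + c * chi t); split.
- by move=> x; rewrite alphaK chiN mulrN opprD opprB.
- move=> d; rewrite big_split /= dh_closed // -mulr_sumr chi_closed mulr0.
  by rewrite addr0.
- by move=> d; rewrite -[RHS](hL d); apply: eq_bigr => t _; rewrite mulrDr.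
- move=> g Hg Eg; rewrite big_split /= loop_dh // add0r -mulr_sumr.
  by rewrite big1_seq ?mulr0 // => t /andP[_ tg]; apply: chiE; apply: (allP Eg).
- rewrite big_split /= loop_dh // add0r -mulr_sumr -/k mulVf //.
Qed.

Lemma core_unique (b : T -> R) : (forall x, b (alpha x) = - b x) ->
  (forall d, \sum_(t | fconnect p d t) b t = 0) ->
  (forall d, \sum_(t | fconnect q d t) w t * b t = 0) ->
  (forall g, cycle (fun x y => fconnect q (alpha x) y) g -> all Ecut g ->
    \sum_(x <- g) b x = 0) ->
  \sum_(x <- B) b x = 0 -> forall x, b x = 0.
Proof.
move=> bN bp bq bl bB.
have [h [hq hE]] := potential qinj alphaK Ecut_alpha bN bl connC_all.
pose r x := b x - (h (alpha x) - h x).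
have rN x : r (alpha x) = - r x by rewrite /r bN alphaK; ring.
have r0 t : Ecut t -> r t = 0 by move=> Et; rewrite /r (hE t Et) subrr.
have rc y z : y \in A -> z \in A -> fconnect p (alpha y) z -> r z = r y.
  move=> yA zA Hyz; have := osum_consec yA zA Hyz r0.
  rewrite /r sumrB bp dh_closed // subrr => /esym/eqP.
  by rewrite -/(r z) -/(r (alpha y)) rN addr_eq0 opprK => /eqP.
have [a0 [b0 [a0A Hab HB]]] := B_sum r0.
have ra0 : r a0 = 0.
  have Bs : \sum_(x <- B) b x = \sum_(x <- B) (h (alpha x) - h x) + \sum_(x <- B) r x.
    by rewrite -big_split; apply: eq_bigr => x _ /=; rewrite /r addrC subrK.
  move: bB; rewrite Bs.
  rewrite loop_dh // add0r HB; case/orP: Hab => /eqP-> //.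
  by rewrite rN => /eqP; rewrite oppr_eq0 => /eqP.
have rz x : r x = 0.
  case Ex: (Ecut x); first exact: r0.
  move/negbFE: Ex => /orP[xA|axA]; first by rewrite (A_const rc xA a0A).
  by rewrite -[x]alphaK rN (A_const rc axA a0A) ra0 oppr0.
have bh x : b x = h (alpha x) - h x by apply/eqP; rewrite -subr_eq0 -/(r x) rz.
have hL d : \sum_(y | fconnect q d y) w y * (h (alpha y) - h y) = 0.
  by rewrite -[RHS](bq d); apply: eq_bigr => t _; rewrite bh.
have hc := harmonic_const wP connQ hq hL.
by move=> x; rewrite bh (hc (alpha x) x) subrr.
Qed.

End Comb.

Local Open Scope complex_scope.

Lemma ReE (R : rcfType) (z w : R[i]) :
  complex.Re z = complex.Re w -> complex.Im z = complex.Im w -> z = w.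
Proof. by case: z => a b; case: w => c d /= -> ->. Qed.

Lemma cancel_i (R : rcfType) (u v : R[i]) (r : R) :
  - r%:C * v = -'i%C%C * u -> u = -'i%C%C * r%:C * v.
Proof.
move=> E; have i0 : (-'i%C : R[i]) != 0.
  by apply/eqP => /(congr1 (@complex.Im R)) /= /eqP; rewrite oppr_eq0 oner_eq0.
apply: (mulfI i0); rewrite -E; clear E; case: v => a b; apply: ReE => /=; ring.
Qed.

Section Main.
Variables (R : rcfType) (T : finType) (sigma alpha : T -> T) (rhoP rhoD : T -> R).
Hypothesis cm : cell_map sigma alpha.
Hypothesis cs : conformal_structure alpha rhoP rhoD.

Lemma sinj : injective sigma. Proof. by case: cm. Qed.
Lemma aK : involutive alpha. Proof. by case: cm => _ H _ _ x; exact: H. Qed.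
Lemma sconn x y : connect (fun x y => (y == sigma x) || (y == alpha x)) x y.
Proof. by case: cm => _ _ _; apply. Qed.

Lemma vinj k : injective (vstep sigma alpha k).
Proof.
case: k => /=; last exact: sinj.
by move=> x y; rewrite /phi => /sinj /(inv_inj aK).
Qed.

Lemma vpq k x : vstep sigma alpha (~~ k) x = vstep sigma alpha k (alpha x).
Proof. by case: k => //=; rewrite /phi aK. Qed.

Lemma vconn k x y : connect (stepE (vstep sigma alpha k) alpha predT) x y.
Proof.
apply: (connect_sub _ (sconn x y)) => u v /orP[]/eqP->; last first.
  by apply: connect1; rewrite /stepE eqxx !orbT.
case: k => /=; last by apply: connect1; rewrite /stepE eqxx.
apply: (connect_trans (y := alpha u)); first by apply: connect1; rewrite /stepE eqxx !orbT.
by apply: connect1; rewrite /stepE /phi aK eqxx.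
Qed.

Lemma orbit_sumE (f : T -> T) (finj : injective f) d (F : T -> R[i]) :
  \sum_(x <- orbit f d) F x = \sum_(x | fconnect f d x) F x.
Proof.
rewrite big_uniq ?orbit_uniq //; apply: eq_bigl => x; by rewrite fconnect_orbit.
Qed.

Lemma fval_form (Phi : lform R T) : is_form alpha Phi ->
  forall k d, fval Phi k (alpha d) = - fval Phi k d.
Proof. by move=> H [] d; case: (H d). Qed.

Lemma fval_closed (Phi : lform R T) : closed_form sigma alpha Phi ->
  forall k d, \sum_(x | fconnect (vstep sigma alpha (~~ k)) d x) fval Phi k x = 0.
Proof.
move=> H [] d /=; case: (H d) => H1 H2.
  by rewrite -(orbit_sumE sinj).
by rewrite -(orbit_sumE (@vinj true)).
Qed.

Lemma closed_fval (Phi : lform R T) :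
  (forall k d, \sum_(x | fconnect (vstep sigma alpha (~~ k)) d x) fval Phi k x = 0) ->
  closed_form sigma alpha Phi.
Proof.
move=> H d; split.
  by rewrite (orbit_sumE (@vinj true)); exact: (H false d).
by rewrite (orbit_sumE sinj); exact: (H true d).
Qed.

Definition wt k d : R := if k then rhoP d else rhoD d.
Definition eps k : R := if k then 1 else -1.
Definition cf k d : R := eps k * wt k d.

Lemma wt_pos k d : 0 < wt k d. Proof. by case: k; case: (cs d). Qed.
Lemma wt_alpha k d : wt k (alpha d) = wt k d. Proof. by case: k; case: (cs d). Qed.
Lemma rPE d : rhoP d = (rhoD d)^-1.
Proof.
case: (cs d) => _ rD0 _ _ H; have rD1 : rhoD d != 0 by rewrite gt_eqF.
by rewrite -[rhoP d]mulr1 -(mulfV rD1) mulrA H mul1r.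
Qed.
Lemma rD0 d : rhoD d != 0. Proof. by case: (cs d) => _ H _ _ _; rewrite gt_eqF. Qed.

Lemma holo_rel (Phi : lform R T) k : is_form alpha Phi ->
  holomorphic sigma alpha rhoP rhoD Phi ->
  forall d, fval Phi k d = 'i%C * (cf k d)%:C * fval Phi (~~ k) d.
Proof.
move=> Hf [_ Hh] d; have := congr1 (fun w : lform R T => w.1 d) Hh; rewrite /= !ffunE => E1.
have E2 := cancel_i E1.
case: k; rewrite /fval /cf /wt /eps /=.
  by rewrite E2; case: (Phi.2 d) => a b; apply: ReE => /=; rewrite rPE; field;
    exact: rD0.
by rewrite E2; case: (Phi.2 d) => a b; apply: ReE => /=; ring.
Qed.

Definition mkform k (U V : T -> R[i]) : lform R T :=
  if k then ([ffun d => V d], [ffun d => U d]) else ([ffun d => U d], [ffun d => V d]).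

Lemma mkformU k U V d : fval (mkform k U V) k d = U d.
Proof. by case: k; rewrite /= ffunE. Qed.
Lemma mkformV k U V d : fval (mkform k U V) (~~ k) d = V d.
Proof. by case: k; rewrite /= ffunE. Qed.

Lemma lform_ext (Phi1 Phi2 : lform R T) :
  (forall k d, fval Phi1 k d = fval Phi2 k d) -> Phi1 = Phi2.
Proof.
case: Phi1 => a1 b1; case: Phi2 => a2 b2 H; congr pair; apply/ffunP => d.
  exact: (H false d).
exact: (H true d).
Qed.

Lemma neq_negb (b : bool) : (b != ~~ b) = true. Proof. by case: b. Qed.
Lemma negb_neq (b : bool) : (~~ b != b) = true. Proof. by case: b. Qed.

Lemma k_cases (kA k : bool) : k = kA \/ k = ~~ kA.
Proof. by case: k; case: kA; auto. Qed.

Lemma ReCM (r : R) (z : R[i]) : complex.Re (r%:C * z) = r * complex.Re z.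
Proof. by case: z => a b /=; ring. Qed.
Lemma ImCM (r : R) (z : R[i]) : complex.Im (r%:C * z) = r * complex.Im z.
Proof. by case: z => a b /=; ring. Qed.
Lemma ReiC (r : R) (z : R[i]) : complex.Re ('i%C * r%:C * z) = - (r * complex.Im z).
Proof. by case: z => a b /=; ring. Qed.

Lemma eps_neq0 k : eps k != 0.
Proof. by case: k; rewrite /eps ?oppr_eq0 oner_eq0. Qed.

Lemma cf_alpha k d : cf k (alpha d) = cf k d.
Proof. by rewrite /cf wt_alpha. Qed.

Lemma form_fval (Phi : lform R T) :
  (forall k d, fval Phi k (alpha d) = - fval Phi k d) -> is_form alpha Phi.
Proof. by move=> H d; split; [exact: (H false d)|exact: (H true d)]. Qed.

Lemma hodge_mk k (b : T -> R) : (forall x, b (alpha x) = - b x) ->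
  let Phi := mkform k (fun d => 'i%C * (cf k d)%:C * (b d)%:C) (fun d => (b d)%:C) in
  hodge alpha rhoP rhoD Phi = ([ffun d => -'i%C * Phi.1 d], [ffun d => -'i%C * Phi.2 d]).
Proof.
move=> bN /=; case: k; rewrite /hodge /cf /wt /eps /=; congr pair; apply/ffunP => d;
  rewrite !ffunE ?bN; case: (cs d) => _ _ E1 E2 _; rewrite ?E1 ?E2 ?cf_alpha /cf /wt /eps ?bN;
  apply: ReE => /=; rewrite ?rPE; field; do ?[exact: rD0 | done].
Qed.

Lemma main_sec (kA : bool) (A : seq T) (kB : bool) (B : seq T) :
  simple_loop sigma alpha kA A -> simple_loop sigma alpha kB B ->
  n_dual_edges alpha kA A kB B = 1%N ->
  exists! Phi : lform R T, [/\ is_form alpha Phi, holomorphic sigma alpha rhoP rhoD Phi,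
     complex.Re (integral Phi kB B) = 1 &
     forall (kg : bool) (g : seq T), is_loop sigma alpha kg g ->
       ~~ has (fun x => has (edge_dual alpha kg x kA) A) g ->
       complex.Re (integral Phi kg g) = 0].
Proof.
move=> sA sB nAB.
have kBE : kB = ~~ kA.
  case: (k_cases kA kB) => // E; move: nAB; rewrite /n_dual_edges E.
  rewrite (eq_count (a2 := pred0)) ?count_pred0 // => a /=.
  by apply/hasPn => b _; rewrite /edge_dual eqxx.
subst kB.
pose p := vstep sigma alpha kA; pose q := vstep sigma alpha (~~ kA).
have pinj : injective p := @vinj kA.
have pq : forall x, q x = p (alpha x) := vpq kA.
have connp := vconn kA.
case/and4P: sA => _ Acyc Auniq Apair; case/and4P: sB => _ Bcyc Buniq _.
have AB1 : count (fun a => has (fun b => (b == a) || (b == alpha a)) B) A = 1%N.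
  rewrite -nAB /n_dual_edges; apply: eq_count => a; apply: eq_has => b.
  by rewrite /edge_dual neq_negb.
pose w := wt kA.
have wP := wt_pos kA; have walpha := wt_alpha kA.
pose sol (Phi : lform R T) := [/\ is_form alpha Phi, holomorphic sigma alpha rhoP rhoD Phi,
     complex.Re (integral Phi (~~ kA) B) = 1 &
     forall (kg : bool) (g : seq T), is_loop sigma alpha kg g ->
       ~~ has (fun x => has (edge_dual alpha kg x kA) A) g ->
       complex.Re (integral Phi kg g) = 0].
have Ecut_has kg g : kg = ~~ kA -> all (Ecut alpha A) g ->
    ~~ has (fun x => has (edge_dual alpha kg x kA) A) g.
  move=> -> Eg; apply/hasPn => x xg; apply/hasPn => a aA.
  rewrite /edge_dual negb_neq /=; move: Eg => /allP /(_ x xg).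
  rewrite /Ecut /cr negb_or => /andP[n1 n2].
  by apply/orP => -[]/eqP E; [rewrite -E aA in n1|rewrite -E aA in n2].
have sol_facts Phi : sol Phi ->
  let V := fval Phi (~~ kA) in
  [/\ (forall x, V (alpha x) = - V x) /\
      (forall d, \sum_(x | fconnect p d x) V x = 0),
      forall d, \sum_(x | fconnect q d x) (w x)%:C * V x = 0,
      forall g, cycle (fun x y => fconnect p (alpha x) y) g ->
        \sum_(x <- g) w x * complex.Im (V x) = 0,
      forall g, cycle (fun x y => fconnect q (alpha x) y) g -> all (Ecut alpha A) g ->
        \sum_(x <- g) complex.Re (V x) = 0 &
      \sum_(x <- B) complex.Re (V x) = 1 /\
      forall x, fval Phi kA x = 'i%C * (cf kA x)%:C * V x].
  case=> Hf Hh HB Hl V; have HU := holo_rel kA Hf Hh.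
  split; first split.
  - by move=> x; rewrite /V fval_form.
  - by move=> d; have := fval_closed (proj1 Hh) (~~ kA) d; rewrite negbK.
  - move=> d; have := fval_closed (proj1 Hh) kA d.
    under eq_bigr do rewrite HU /cf rmorphM mulrA -mulrA.
    rewrite -mulr_sumr => /eqP; rewrite mulf_eq0 => /orP[|/eqP //].
    rewrite mulf_eq0 => /orP[] /eqP; first by move/(congr1 (@complex.Im R)) => /= /eqP; rewrite oner_eq0.
    by move/(congr1 (@complex.Re R)) => /= /eqP; rewrite (negbTE (eps_neq0 kA)).
  - move=> g Hg; have := Hl kA g Hg.
    have -> : has (fun x => has (edge_dual alpha kA x kA) A) g = false.
      by apply/hasPn => x _; apply/hasPn => a _; rewrite /edge_dual eqxx.
    move=> /(_ isT); rewrite /integral raddf_sum /=.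
    under eq_bigr do rewrite HU ReiC /cf -mulrA.
    rewrite sumrN -mulr_sumr => /eqP; rewrite oppr_eq0 mulf_eq0 (negbTE (eps_neq0 kA)) /=.
    by move/eqP.
  - move=> g Hg Eg; have := Hl (~~ kA) g Hg (Ecut_has _ _ erefl Eg).
    by rewrite /integral raddf_sum.
  - by split=> //; move: HB; rewrite /integral raddf_sum.
have uniq_sol Phi1 Phi2 : sol Phi1 -> sol Phi2 -> Phi1 = Phi2.
  move=> S1 S2.
  have [[N1 P1] Q1 D1 E1 [F1 U1]] := sol_facts _ S1.
  have [[N2 P2] Q2 D2 E2 [F2 U2]] := sol_facts _ S2.
  set V1 := fval Phi1 (~~ kA) in N1 P1 Q1 D1 E1 F1 U1.
  set V2 := fval Phi2 (~~ kA) in N2 P2 Q2 D2 E2 F2 U2.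
  pose X x := complex.Re (V1 x) - complex.Re (V2 x).
  have X0 : forall x, X x = 0.
    apply: (core_unique pinj aK pq Acyc Auniq Apair Bcyc Buniq AB1 connp wP).
    - by move=> x; rewrite /X N1 N2 !raddfN opprB addrC; congr (_ + _); rewrite opprK.
    - move=> d; rewrite sumrB -!raddf_sum (P1 d) (P2 d) /=; exact: subrr.
    - move=> d; under eq_bigr do rewrite /X mulrBr -!ReCM.
      rewrite sumrB -!raddf_sum (Q1 d) (Q2 d) /=; exact: subrr.
    - by move=> g Hg Eg; rewrite sumrB (E1 g Hg Eg) (E2 g Hg Eg) subrr.
    - by rewrite sumrB F1 F2 subrr.
  pose Z x := w x * (complex.Im (V1 x) - complex.Im (V2 x)).
  have ZN x : Z (alpha x) = - Z x.
    rewrite /Z /w walpha N1 N2 !raddfN -mulrN; congr (_ * _); rewrite opprB addrC.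
    by congr (_ + _); rewrite opprK.
  have Zl g : cycle (Rl p alpha) g -> all predT g -> \sum_(x <- g) Z x = 0.
    move=> Hg _; under eq_bigr do rewrite /Z mulrBr.
    by rewrite sumrB (D1 g Hg) (D2 g Hg) subrr.
  have [F [Fp FE]] := potential (E := predT) pinj aK (fun _ => erefl) ZN Zl connp.
  have FL d : \sum_(y | fconnect p d y) (w y)^-1 * (F (alpha y) - F y) = 0.
    transitivity (\sum_(y | fconnect p d y) (complex.Im (V1 y) - complex.Im (V2 y))).
      apply: eq_bigr => y _; rewrite -(FE y isT) /Z mulKf //.
      by rewrite gt_eqF.
    rewrite sumrB -!raddf_sum (P1 d) (P2 d) /=; exact: subrr.
  have wiP x : 0 < (w x)^-1 by rewrite invr_gt0.
  have Fc := harmonic_const wiP connp Fp FL.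
  have Y0 x : complex.Im (V1 x) = complex.Im (V2 x).
    have : Z x = 0 by rewrite (FE x isT) (Fc (alpha x) x) subrr.
    move/eqP; rewrite /Z mulf_eq0 gt_eqF //= subr_eq0 => /eqP //.
  have V12 x : V1 x = V2 x.
    by apply: ReE => //; apply/eqP; rewrite -subr_eq0 -/(X x) X0.
  apply: lform_ext => k d; case: (k_cases kA k) => ->; first by rewrite U1 U2 V12.
  exact: V12.
have [b [bN bp bq bl bB]] :=
  core_exist pinj aK pq Acyc Auniq Apair Bcyc Buniq AB1 connp wP walpha.
pose U d := 'i%C * (cf kA d)%:C * (b d)%:C; pose V d := (b d)%:C : R[i].
pose Phi0 := mkform kA U V.
have fvk k d : fval Phi0 k d = if k == kA then U d else V d.
  case: (k_cases kA k) => ->; first by rewrite eqxx mkformU.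
  by rewrite (negbTE (negb_neq kA)) mkformV.
have S0 : sol Phi0.
  have Hf : is_form alpha Phi0.
    apply: form_fval => k d; rewrite !fvk; case: (k == kA).
      by rewrite /U cf_alpha bN rmorphN mulrN.
    by rewrite /V bN rmorphN.
  split=> //.
  - split; last exact: hodge_mk.
    apply: closed_fval => k d; case: (k_cases kA k) => ->.
      under eq_bigr do rewrite fvk eqxx /U -mulrA -rmorphM.
      rewrite -mulr_sumr -rmorph_sum /=.
      have -> : \sum_(i | fconnect (vstep sigma alpha (~~ kA)) d i) cf kA i * b i
               = eps kA * \sum_(i | fconnect q d i) w i * b i.
        by rewrite mulr_sumr; apply: eq_bigr => i _; rewrite /cf mulrA.
      by rewrite bq mulr0 mulr0.
    under eq_bigr do rewrite fvk (negbTE (negb_neq kA)).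
    by rewrite negbK -rmorph_sum /= bp.
  - rewrite /integral raddf_sum /=; under eq_bigr do rewrite fvk (negbTE (negb_neq kA)).
    exact: bB.
  - move=> kg g Hg Hhas; rewrite /integral raddf_sum /=; case: (k_cases kA kg) => Ek.
      rewrite big1 // => x _; rewrite Ek fvk eqxx /U ReiC /=; ring.
    under eq_bigr do rewrite Ek fvk (negbTE (negb_neq kA)).
    apply: bl; first by rewrite Ek in Hg.
    apply/allP => x xg; rewrite /Ecut /cr negb_or; apply/andP; split; apply/negP => xA;
      move/hasPn: Hhas => /(_ x xg) /hasPn; [move=> /(_ x xA)|move=> /(_ (alpha x) xA)];
      by rewrite /edge_dual Ek negb_neq eqxx ?orbT.
exists Phi0; split; first exact: S0.
by move=> Phi S; apply: uniq_sol.
Qed.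

End Main.

Theorem mainTheorem10 (R : rcfType) (T : finType) (sigma alpha : T -> T)
    (rhoP rhoD : T -> R) (kA : bool) (A : seq T) (kB : bool) (B : seq T) :
  cell_map sigma alpha ->
  conformal_structure alpha rhoP rhoD ->
  simple_loop sigma alpha kA A ->
  simple_loop sigma alpha kB B ->
  non_intersecting sigma alpha kA A kB B ->
  n_dual_edges alpha kA A kB B = 1%N ->
  exists! Phi : lform R T,
    [/\ is_form alpha Phi,
        holomorphic sigma alpha rhoP rhoD Phi,
        complex.Re (integral Phi kB B) = 1 &
        forall (kg : bool) (g : seq T),
          is_loop sigma alpha kg g ->
          ~~ has (fun x => has (edge_dual alpha kg x kA) A) g ->
          complex.Re (integral Phi kg g) = 0].
Proof.
move=> cm cs sA sB _ nAB; exact: (main_sec cm cs sA sB nAB).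
Qed.
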